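(* Let $f,g:\mathcal{O}\to\mathcal{F}$ be scaling maps with scaling ratios $q^{\lambda_f}$ and $q^{\lambda_g}$, where $\lambda_f>\lambda_g\ge0$, and let $\tilde f(x)=[f(x)]$, $\tilde g(x)=[g(x)]$. Let $D\subset\mathcal{O}$ be a disk of radius $q^{-\gamma}$ with $0\le\gamma\le\lambda_f-\lambda_g$. Then $$\mu\big(\tilde f^{-1}(D)\cap\tilde g^{-1}(D)\big)=\mathbb{E}\big(1_D\circ\tilde f\cdot 1_D\circ\tilde g\big)=\mu(D)^2,$$ where $\mathbb{E}$ is expectation with respect to the normalized Haar measure $\mu$ on $\mathcal{O}$.
   Context: $\mathcal{F}$ is a non-Archimedean local field with valuation ring $\mathcal{O}$, maximal ideal $\mathfrak{p}$, $q=\#\mathcal{O}/\mathfrak{p}$, normalized absolute value $|\cdot|_\mathfrak{p}$, prime element $\pi$. Fix representatives $C\subset\mathcal{O}$ of $\mathcal{O}/\mathfrak{p}$ with $0\in C$; writing $x=\sum_{n\ge v}c_n\pi^n$ ($c_n\in C$), $[x]=\sum_{n\ge0}c_n\pi^n$. A disk of radius $q^{k}$ is $\{x:|x-a|_\mathfrak{p}\le q^k\}$. A map $f:\Omega\to\mathcal{F}$ is scaling with ratio $q^\lambda$ if $|f(x)-f(y)|_\mathfrak{p}=q^\lambda|x-y|_\mathfrak{p}$ for all $x,y$. $\mu$ is Haar measure with $\mu(\mathcal{O})=1$; $1_D$ is the indicator of $D$. *)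

(* Defs.v *)
From HB Require Import structures.
From Stdlib Require Import ClassicalEpsilon.
From mathcomp Require Import all_boot all_order all_algebra.
From mathcomp Require Import all_classical all_reals all_analysis.
Set Implicit Arguments. Unset Strict Implicit. Unset Printing Implicit Defensive.
Import Order.TTheory GRing.Theory Num.Theory.
Local Open Scope classical_set_scope.
Local Open Scope ring_scope.

Section LocalField.
Variables (R : realType) (F : fieldType).

(** A non-Archimedean local field: [F] together with its normalized
    absolute value [absv], residue-field cardinality [q], a prime element
    [pi] and a (duplicate-free) list [C] of representatives of O/p with
    0 in C. *)
Definition nonarch_local_field (absv : F -> R) (q : nat) (pi : F) (C : seq F)
  : Prop :=
  (1 < q)%N /\
      (forall x, absv x = 0 <-> x = 0) /\
      (forall x y, absv (x * y) = absv x * absv y) /\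
      (forall x y, absv (x + y) <= Num.max (absv x) (absv y)) /\
      (forall x, x != 0 -> exists k : int, absv x = (q%:R : R) ^ k) /\
      absv pi = (q%:R : R)^-1 /\
      (size C = q /\ uniq C /\ 0 \in C /\
          (forall c, c \in C -> absv c <= 1) /\
          (forall c c', c \in C -> c' \in C -> c != c' -> absv (c - c') = 1) /\
          (forall x, absv x <= 1 -> exists2 c, c \in C & absv (x - c) < 1)) /\
      (forall u : nat -> F,
        (forall eps : R, 0 < eps -> exists N : nat, forall m n : nat,
            (N <= m)%N -> (N <= n)%N -> absv (u m - u n) < eps) ->
        exists l : F, forall eps : R, 0 < eps -> exists N : nat,
            forall n : nat, (N <= n)%N -> absv (u n - l) < eps).

Definition disk (absv : F -> R) (q : nat) (a : F) (k : int) : set F :=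
  [set x | absv (x - a) <= (q%:R : R) ^ k].

Definition ring_O (absv : F -> R) : set F := [set x | absv x <= 1].

Definition disks (absv : F -> R) (q : nat) : set (set F) :=
  [set D | exists (a : F) (k : int), D = disk absv q a k].

Definition scaling (absv : F -> R) (q : nat) (f : F -> F) (lam : int) : Prop :=
  forall x y, absv x <= 1 -> absv y <= 1 ->
    absv (f x - f y) = (q%:R : R) ^ lam * absv (x - y).

Definition frac_part (pi : F) (C : seq F) (z : F) : Prop :=
  exists (k : nat) (c : nat -> F),
    (forall i, c i \in C) /\ z = \sum_(i < k) c i * pi ^- i.+1.

(** y = [x]: x = sum_{n>=v} c_n pi^n and y = sum_{n>=0} c_n pi^n, i.e.
    y is in O and x - y is the (finite) negative-index part. *)
Definition is_bracket (absv : F -> R) (pi : F) (C : seq F) (x y : F) : Prop :=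
  absv y <= 1 /\ frac_part pi C (x - y).

Definition bracket (absv : F -> R) (pi : F) (C : seq F) (x : F) : F :=
  epsilon (inhabits (0 : F)) (is_bracket absv pi C x).

End LocalField.

(** F viewed as a pointed type, then as the measurable space whose
    sigma-algebra is generated by the disks (= Borel sets of F). *)
Definition ptF (F : fieldType) : Type := F.
HB.instance Definition _ (F : fieldType) := Choice.on (ptF F).
HB.instance Definition _ (F : fieldType) := isPointed.Build (ptF F) (0 : F).

Definition Fmeas (R : realType) (F : fieldType) (absv : F -> R) (q : nat) :=
  g_sigma_algebraType (disks absv q : set (set (ptF F))).

Definition haar_normalized (R : realType) (F : fieldType) (absv : F -> R)
  (q : nat) (mu : {measure set (Fmeas absv q) -> \bar R}) : Prop :=
  mu (ring_O absv) = 1%E /\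
  (forall (b : F) (A : set (Fmeas absv q)), measurable A ->
     mu ((fun x : F => b + x) @` A) = mu A).

(* Main.v *)
Require Import Defs.
From HB Require Import structures.
From Stdlib Require Import ClassicalEpsilon.
From mathcomp Require Import all_boot all_order all_algebra.
From mathcomp Require Import all_classical all_reals all_analysis.
From mathcomp Require Import zify.
From mathcomp.algebra_tactics Require Import ring.
Import Order.TTheory GRing.Theory Num.Theory.
Local Open Scope classical_set_scope.
Local Open Scope ring_scope.
Set Implicit Arguments. Unset Strict Implicit. Unset Printing Implicit Defensive.

Section LF.
Variables (R : realType) (F : fieldType) (absv : F -> R) (q : nat) (pi : F) (C : seq F).
Hypothesis HF : nonarch_local_field absv q pi C.
Local Notation Q := (q%:R : R).

Lemma q_gt1 : (1 < q)%N. Proof. by case: HF. Qed.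
Lemma Q_gt1 : 1 < Q. Proof. by rewrite ltr1n q_gt1. Qed.
Lemma Q_gt0 : 0 < Q. Proof. exact: lt_trans ltr01 Q_gt1. Qed.
Lemma Q_neq0 : Q != 0. Proof. by rewrite gt_eqF // Q_gt0. Qed.
Lemma abs0P x : absv x = 0 <-> x = 0. Proof. by case: HF => _ [] H _; apply: H. Qed.
Lemma absM x y : absv (x * y) = absv x * absv y. Proof. by case: HF => _ [] _ [] H _; apply: H. Qed.
Lemma absU x y : absv (x + y) <= Num.max (absv x) (absv y).
Proof. by case: HF => _ [] _ [] _ [] H _; apply: H. Qed.
Lemma absdisc x : x != 0 -> exists k : int, absv x = Q ^ k.
Proof. by case: HF => _ [] _ [] _ [] _ [] H _; apply: H. Qed.
Lemma abspi : absv pi = Q^-1. Proof. by case: HF => _ [] _ [] _ [] _ [] _ [] H _. Qed.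
Lemma Csize : size C = q. Proof. by case: HF => _ [] _ [] _ [] _ [] _ [] _ [] [] H _. Qed.
Lemma Cuniq : uniq C. Proof. by case: HF => _ [] _ [] _ [] _ [] _ [] _ [] [] _ [] H _. Qed.
Lemma C0 : 0 \in C. Proof. by case: HF => _ [] _ [] _ [] _ [] _ [] _ [] [] _ [] _ [] H _ _. Qed.
Lemma Cabs c : c \in C -> absv c <= 1.
Proof. by case: HF => _ [] _ [] _ [] _ [] _ [] _ [] [] _ [] _ [] _ [] H _ _; apply: H. Qed.
Lemma Csep c c' : c \in C -> c' \in C -> c != c' -> absv (c - c') = 1.
Proof. by case: HF => _ [] _ [] _ [] _ [] _ [] _ [] [] _ [] _ [] _ [] _ [] H _ _; apply: H. Qed.
Lemma Cex x : absv x <= 1 -> exists2 c, c \in C & absv (x - c) < 1.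
Proof. by case: HF => _ [] _ [] _ [] _ [] _ [] _ [] [] _ [] _ [] _ [] _ [] _ H _; apply: H. Qed.

Lemma Qz_gt0 k : 0 < Q ^ k. Proof. by rewrite exprz_gt0 // Q_gt0. Qed.
Lemma Qz_ge0 k : 0 <= Q ^ k. Proof. exact: ltW (Qz_gt0 k). Qed.
Lemma QzM m n : Q ^ m * Q ^ n = Q ^ (m + n). Proof. by rewrite expfzDr // Q_neq0. Qed.
Lemma Qz_le m n : (Q ^ m <= Q ^ n) = (m <= n). Proof. by rewrite (ler_eXz2l Q_gt1). Qed.
Lemma Qz_lt m n : (Q ^ m < Q ^ n) = (m < n). Proof. by rewrite (ltr_eXz2l Q_gt1). Qed.
Lemma Qz0 : Q ^ 0 = 1. Proof. exact: expr0z. Qed.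

Lemma abs0 : absv 0 = 0. Proof. by apply/abs0P. Qed.
Lemma abs_ge0 x : 0 <= absv x.
Proof.
have [->|/absdisc [k ->]] := eqVneq x 0; first by rewrite abs0.
exact: Qz_ge0.
Qed.
Lemma abs_eq0 x : (absv x == 0) = (x == 0).
Proof. by apply/eqP/eqP => /abs0P. Qed.
Lemma abs1 : absv 1 = 1.
Proof.
have h : absv 1 * absv 1 = absv 1 by rewrite -absM mulr1.
have nz : absv 1 != 0 by rewrite abs_eq0 oner_neq0.
by apply: (mulfI nz); rewrite h mulr1.
Qed.
Lemma absN1 : absv (-1) = 1.
Proof.
have h : absv (-1) * absv (-1) = 1 by rewrite -absM mulrNN mulr1 abs1.
have : absv (-1) ^+ 2 = 1 by rewrite expr2.
move/eqP; rewrite sqrf_eq1 => /orP [/eqP //|/eqP e].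
by have := abs_ge0 (-1); rewrite e ler0N1.
Qed.
Lemma absN x : absv (- x) = absv x.
Proof. by rewrite -mulN1r absM absN1 mul1r. Qed.
Lemma absB x y : absv (x - y) = absv (y - x).
Proof. by rewrite -absN opprB. Qed.
Lemma absV x : absv (x^-1) = (absv x)^-1.
Proof.
have [->|nz] := eqVneq x 0; first by rewrite invr0 abs0 invr0.
have h : absv x * absv x^-1 = 1 by rewrite -absM mulfV // abs1.
have nz' : absv x != 0 by rewrite abs_eq0.
by rewrite -[RHS]mulr1 -h mulrA mulVf // mul1r.
Qed.
Lemma absX x n : absv (x ^+ n) = absv x ^+ n.
Proof. by elim: n => [|n IH]; rewrite ?expr0 ?abs1 // !exprS absM IH. Qed.
Lemma pi_neq0 : pi != 0.
Proof. by rewrite -abs_eq0 abspi invr_eq0 Q_neq0. Qed.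
Lemma abspiz (k : int) : absv (pi ^ k) = Q ^ (- k).
Proof.
case: k => n.
  by rewrite -exprnP absX abspi exprnP exprz_inv.
by rewrite NegzE opprK -exprnN absV absX abspi exprnP exprz_inv invr_expz opprK.
Qed.
Lemma pizM m n : pi ^ m * pi ^ n = pi ^ (m + n).
Proof. by rewrite expfzDr // pi_neq0. Qed.

Lemma abs_le_add x y r : absv x <= r -> absv y <= r -> absv (x + y) <= r.
Proof. by move=> hx hy; apply: le_trans (absU x y) _; rewrite ge_max hx hy. Qed.
Lemma abs_le_sub x y r : absv x <= r -> absv y <= r -> absv (x - y) <= r.
Proof. by move=> hx hy; apply: abs_le_add; rewrite ?absN. Qed.
Lemma abs_strict x y : absv y < absv x -> absv (x + y) = absv x.
Proof.
move=> hyx; apply/eqP; rewrite eq_le; apply/andP; split.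
  by apply: le_trans (absU x y) _; rewrite ge_max lexx ltW.
have := absU (x + y) (- y); rewrite addrK absN le_max => /orP [//|h].
by have := lt_le_trans hyx h; rewrite ltxx.
Qed.
Lemma abs_disc x k : absv x < Q ^ k -> absv x <= Q ^ (k - 1).
Proof.
have [->|/absdisc [m ->]] := eqVneq x 0; first by rewrite abs0 => _; exact: Qz_ge0.
by rewrite Qz_lt Qz_le => h; lia.
Qed.
Lemma abs_disc1 x : absv x < 1 -> absv x <= Q ^ (-1).
Proof. by rewrite -Qz0 => /abs_disc. Qed.

Definition dig (w : F) := nth 0 C (find (fun c => absv (w - c) < 1) C).
Lemma digP w : absv w <= 1 -> dig w \in C /\ absv (w - dig w) < 1.
Proof.
move=> /Cex [c cC hc].
have hh : has (fun c => absv (w - c) < 1) C by apply/hasP; exists c.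
split; first by rewrite /dig mem_nth // -has_find.
exact: (nth_find 0 hh).
Qed.


Lemma abspiN n : absv (pi ^- n) = Q ^ (n%:Z).
Proof. by rewrite exprnN abspiz opprK. Qed.

Lemma abs_sum_le n (G : nat -> F) r : 0 <= r ->
  (forall i, (i < n)%N -> absv (G i) <= r) -> absv (\sum_(i < n) G i) <= r.
Proof.
move=> r0; elim: n => [|n IH] h; first by rewrite big_ord0 abs0.
rewrite big_ord_recr /=; apply: abs_le_add; last exact: h.
by apply: IH => i hi; apply: h; apply: ltnW.
Qed.

Lemma Cdiff_le c c' : c \in C -> c' \in C -> absv (c - c') <= 1.
Proof. by move=> h h'; apply: abs_le_sub; apply: Cabs. Qed.

Lemma frac_zero K (c c' : nat -> F) : (forall i, c i \in C) -> (forall i, c' i \in C) ->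
  absv (\sum_(i < K) (c i - c' i) * pi ^- i.+1) <= 1 ->
  \sum_(i < K) (c i - c' i) * pi ^- i.+1 = 0.
Proof.
move=> hc hc'; elim: K => [|K IH]; first by rewrite big_ord0.
rewrite big_ord_recr /=.
have [e|ne] := eqVneq (c K) (c' K).
  by rewrite e subrr mul0r addr0 => /IH ->.
have habs : absv ((c K - c' K) * pi ^- K.+1) = Q ^ (K.+1 : int).
  by rewrite absM Csep // mul1r abspiN.
have hs : absv (\sum_(i < K) (c i - c' i) * pi ^- i.+1) <= Q ^ (K : int).
  apply: (abs_sum_le (G := fun i => (c i - c' i) * pi ^- i.+1)); first exact: Qz_ge0.
  move=> i hi; rewrite absM abspiN.
  apply: le_trans (_ : 1 * Q ^ (i.+1 : int) <= _).
    by apply: ler_wpM2r; [exact: Qz_ge0 | exact: Cdiff_le].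
  by rewrite mul1r Qz_le; lia.
rewrite addrC abs_strict; last by rewrite habs; apply: le_lt_trans hs _; rewrite Qz_lt; lia.
by rewrite habs -Qz0 Qz_le; lia.
Qed.

Lemma frac_pad s : frac_part pi C s -> exists k (c : nat -> F), (forall i, c i \in C) /\
  forall K, (k <= K)%N -> s = \sum_(i < K) c i * pi ^- i.+1.
Proof.
move=> [k [c [hc ->]]]; exists k, (fun i => if (i < k)%N then c i else 0); split.
  by move=> i; case: ifP => _ //; exact: C0.
move=> K hK; rewrite (big_ord_widen _ (fun i => c i * pi ^- i.+1) hK) big_mkcond /=.
by apply: eq_bigr => i _; case: ifP => _ //; rewrite mul0r.
Qed.

Lemma frac_sep s s' : frac_part pi C s -> frac_part pi C s' -> absv (s - s') <= 1 -> s = s'.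
Proof.
move=> /frac_pad [k [c [hc Hc]]] /frac_pad [k' [c' [hc' Hc']]].
rewrite (Hc (maxn k k')) ?leq_maxl // (Hc' (maxn k k')) ?leq_maxr //.
set K := maxn k k'.
have E : \sum_(i < K) c i * pi ^- i.+1 - \sum_(i < K) c' i * pi ^- i.+1 =
          \sum_(i < K) (c i - c' i) * pi ^- i.+1.
  by rewrite -sumrB; apply: eq_bigr => i _; rewrite mulrBl.
rewrite E => /(frac_zero hc hc') H0.
by apply/eqP; rewrite -subr_eq0 E H0.
Qed.

Lemma pipN n : pi ^+ n * pi ^- n = 1.
Proof. by rewrite mulfV // expf_neq0 // pi_neq0. Qed.

Lemma brk_ex_aux m x : absv x <= Q ^ (m%:Z) -> exists y (c : nat -> F),
  [/\ absv y <= 1, (forall i, c i \in C) & x - y = \sum_(i < m) c i * pi ^- i.+1].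
Proof.
elim: m x => [|m IH] x hx.
  exists x, (fun _ => 0); split; [by rewrite expr0z in hx | by move=> _; exact: C0 | by rewrite subrr big_ord0].
set w := x * pi ^+ m.+1.
have hw : absv w <= 1.
  rewrite /w absM absX abspi exprnP exprz_inv.
  apply: le_trans (_ : Q ^ (m.+1:int) * Q ^ (- (m.+1:int)) <= _).
    by apply: ler_wpM2r => //; exact: Qz_ge0.
  by rewrite QzM subrr Qz0.
have [dC hd] := digP hw.
set d := dig w in dC hd.
have ex : x - d * pi ^- m.+1 = (w - d) * pi ^- m.+1.
  by rewrite mulrBl /w -mulrA pipN mulr1.
have hx' : absv (x - d * pi ^- m.+1) <= Q ^ (m%:Z).
  rewrite ex absM abspiN.
  apply: le_trans (_ : Q ^ (-1) * Q ^ (m.+1 : int) <= _).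
    by apply: ler_wpM2r; [exact: Qz_ge0 | exact: abs_disc1].
  by rewrite QzM Qz_le; lia.
have [y [c [hy hc E]]] := IH _ hx'.
exists y, (fun i => if i == m then d else c i); split => //.
  by move=> i; case: ifP.
rewrite big_ord_recr /= eqxx.
have -> : \sum_(i < m) (if (widen_ord (leqnSn m) i : nat) == m then d else c i) * pi ^- (widen_ord (leqnSn m) i).+1
   = \sum_(i < m) c i * pi ^- i.+1.
  by apply: eq_bigr => i _ /=; rewrite ltn_eqF.
by rewrite -E addrAC subrK.
Qed.

Lemma bracketP x : is_bracket absv pi C x (bracket absv pi C x).
Proof.
apply: epsilon_spec.
have [m hm] : exists m : nat, absv x <= Q ^ (m%:Z).
  have [->|/absdisc [k hk]] := eqVneq x 0.
    by exists 0%N; rewrite abs0; exact: Qz_ge0.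
  exists `|k|%N; rewrite hk Qz_le; lia.
have [y [c [hy hc E]]] := brk_ex_aux hm.
by exists y; split => //; exists m, c.
Qed.

Lemma bracket_O x : absv (bracket absv pi C x) <= 1.
Proof. by case: (bracketP x). Qed.

Lemma brk_diff z z' : absv (z - z') <= 1 ->
  bracket absv pi C z - bracket absv pi C z' = z - z'.
Proof.
move=> h.
have [b1 f1] := bracketP z; have [b2 f2] := bracketP z'.
have e := frac_sep f1 f2.
have : z - bracket absv pi C z = z' - bracket absv pi C z'.
  apply: e.
  have -> : z - bracket absv pi C z - (z' - bracket absv pi C z') =
     (z - z') - (bracket absv pi C z - bracket absv pi C z') by ring.
  by apply: abs_le_sub => //; apply: abs_le_sub.
move=> e2.
have -> : z - z' = (z - bracket absv pi C z) - (z' - bracket absv pi C z') +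
   (bracket absv pi C z - bracket absv pi C z') by ring.
by rewrite e2 subrr add0r.
Qed.


Local Notation Dk b n := (disk absv q b (- ((n : nat) : int))).

Lemma DkE b n x : Dk b n x = (absv (x - b) <= Q ^ (- (n : int))).
Proof. by []. Qed.

Lemma Dk_O b n x : absv b <= 1 -> Dk b n x -> absv x <= 1.
Proof.
rewrite DkE => hb hx; rewrite -(subrK b x); apply: abs_le_add => //.
by apply: le_trans hx _; rewrite -Qz0 Qz_le; lia.
Qed.

Lemma abs_lt_sub x y r : absv x < r -> absv y < r -> absv (x - y) < r.
Proof.
move=> hx hy; apply: le_lt_trans (absU x (- y)) _.
by rewrite gt_max hx absN hy.
Qed.

Lemma abs_cpi c n : c \in C -> absv (c * pi ^ (n : int)) <= Q ^ (- (n : int)).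
Proof.
move=> cC; rewrite absM abspiz.
by apply: le_trans (_ : 1 * _ <= _); [apply: ler_wpM2r; [exact: Qz_ge0|exact: Cabs] | rewrite mul1r].
Qed.

Lemma abs_cpi_diff c c' n : c \in C -> c' \in C -> c != c' ->
  absv (c * pi ^ (n : int) - c' * pi ^ (n : int)) = Q ^ (- (n : int)).
Proof. by move=> h h' ne; rewrite -mulrBl absM Csep // mul1r abspiz. Qed.

Lemma preimP (h : F -> F) (L : nat) : scaling absv q h L ->
  forall b, absv b <= 1 -> forall j e, absv (e - h b) <= 1 ->
  exists x, (Dk b L `&` h @^-1` Dk e j) = Dk x (L + j)%N.
Proof.
move=> Hh b hb; elim => [|j IH] e he.
  exists b; rewrite addn0; apply/seteqP; split => z /=; first by case.
  move=> hz; split => //; rewrite DkE oppr0 Qz0.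
  rewrite -(subrK (h b) (h z)) -addrA; apply: abs_le_add; last by rewrite absB.
  rewrite Hh //; last exact: Dk_O hz.
  by apply: le_trans (_ : Q ^ (L:int) * Q ^ (- (L:int)) <= _);
    [apply: ler_wpM2l; [exact: Qz_ge0 | exact: hz] | rewrite QzM subrr Qz0].
have [x0 Hx0] := IH e he.
set n := (L + j)%N.
pose y c := x0 + c * pi ^ (n : int).
have yin c : c \in C -> Dk x0 n (y c).
  by move=> cC; rewrite DkE /y addrC addKr; exact: abs_cpi.
have yP c : c \in C -> (Dk b L `&` h @^-1` Dk e j) (y c) by move=> cC; rewrite Hx0; exact: yin.
have DO z : Dk b L z -> absv z <= 1 by move=> hz; exact: Dk_O hz.
pose w c := (h (y c) - e) * pi ^ (- (j : int)).
have hw c : c \in C -> absv (w c) <= 1.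
  move=> cC; have [_ hyc] := yP c cC; rewrite /w absM abspiz opprK.
  apply: le_trans (_ : Q ^ (- (j:int)) * Q ^ (j:int) <= _).
    by apply: ler_wpM2r; [exact: Qz_ge0 | exact: hyc].
  by rewrite QzM addNr Qz0.
have hyy c c' : c \in C -> c' \in C -> c != c' ->
    absv (h (y c) - h (y c')) = Q ^ (- (j : int)).
  move=> cC c'C ne; have [/DO h1 _] := yP c cC; have [/DO h2 _] := yP c' c'C.
  rewrite Hh // /y opprD addrACA subrr add0r abs_cpi_diff // QzM.
  by congr (_ ^ _); rewrite /n; lia.
pose phi c := dig (w c).
have phiinj : {in C &, injective phi}.
  move=> c c' cC c'C ephi; apply/eqP; apply/negPn/negP => ne.
  have e1 : absv (w c - w c') = 1.
    by rewrite /w -mulrBl opprB addrA subrK absM hyy // abspiz opprK QzM addNr Qz0.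
  have [_ d1] := digP (hw c cC); have [_ d2] := digP (hw c' c'C).
  have : absv ((w c - phi c) - (w c' - phi c')) < 1 by apply: abs_lt_sub.
  by rewrite ephi opprB addrA subrK e1 ltxx.
have [_ /(_ 0)] := uniq_min_size (s1 := map phi C) (s2 := C)
  (ltac:(by rewrite map_inj_in_uniq // Cuniq))
  (ltac:(by move=> u /mapP [c cC ->]; case: (digP (hw c cC))))
  (ltac:(by rewrite size_map)).
rewrite C0 => /mapP [c cC e0].
have hwc : absv (w c) < 1 by have [_] := digP (hw c cC); rewrite -/(phi c) -e0 subr0.
have hyc : absv (h (y c) - e) <= Q ^ (- (j.+1 : int)).
  have -> : h (y c) - e = w c * pi ^ (j : int).
    by rewrite /w -mulrA pizM addNr expr0z mulr1.
  rewrite absM abspiz; apply: le_trans (_ : Q ^ (-1) * Q ^ (- (j:int)) <= _).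
    by apply: ler_wpM2r; [exact: Qz_ge0 | exact: abs_disc1].
  by rewrite QzM Qz_le; lia.
have [ybL _] := yP c cC.
exists (y c); rewrite addnS; apply/seteqP; split => z /=.
  move=> [zbL hze].
  have zx0 : Dk x0 n z.
    have : (Dk b L `&` h @^-1` Dk e j) z.
      split => //; apply: le_trans hze _; rewrite Qz_le; lia.
    by rewrite Hx0.
  set u := (z - x0) * pi ^ (- (n : int)).
  have hu : absv u <= 1.
    rewrite /u absM abspiz opprK.
    apply: le_trans (_ : Q ^ (- (n:int)) * Q ^ (n:int) <= _).
      by apply: ler_wpM2r; [exact: Qz_ge0 | exact: zx0].
    by rewrite QzM addNr Qz0.
  have [c'C hc'] := digP hu.
  set c' := dig u in c'C hc'.
  have zy' : absv (z - y c') <= Q ^ (- (n.+1 : int)).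
    have -> : z - y c' = (u - c') * pi ^ (n : int).
      by rewrite mulrBl /u -mulrA pizM addNr expr0z mulr1 /y opprD addrA.
    rewrite absM abspiz; apply: le_trans (_ : Q ^ (-1) * Q ^ (- (n:int)) <= _).
      by apply: ler_wpM2r; [exact: Qz_ge0 | exact: abs_disc1].
    by rewrite QzM Qz_le; lia.
  have [ec|nec] := eqVneq c' c; first by rewrite DkE -ec.
  exfalso.
  have e1 : absv (z - y c) = Q ^ (- (n : int)).
    have -> : z - y c = (y c' - y c) + (z - y c'). by ring.
    have e2 : absv (y c' - y c) = Q ^ (- (n : int)).
      by rewrite /y opprD addrACA subrr add0r abs_cpi_diff.
    rewrite abs_strict e2 //; apply: le_lt_trans zy' _; rewrite Qz_lt; lia.
  have : absv (h z - h (y c)) <= Q ^ (- (j.+1 : int)).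
    have -> : h z - h (y c) = (h z - e) - (h (y c) - e) by rewrite opprB addrA subrK.
    by apply: abs_le_sub.
  rewrite Hh ?DO // e1 QzM Qz_le; rewrite /n; lia.
move=> hz.
have zx0 : Dk x0 n z.
  rewrite DkE -(subrK (y c) z) -addrA; apply: abs_le_add.
    by apply: le_trans hz _; rewrite Qz_le; lia.
  by rewrite /y addrC addKr; exact: abs_cpi.
have : (Dk b L `&` h @^-1` Dk e j) z by rewrite Hx0.
move=> [zbL _]; split => //.
rewrite DkE -(subrK (h (y c)) (h z)) -addrA; apply: abs_le_add => //.
rewrite Hh ?DO //; apply: le_trans (_ : Q ^ (L:int) * Q ^ (- (n.+1:int)) <= _).
  by apply: ler_wpM2l; [exact: Qz_ge0 | exact: hz].
by rewrite QzM Qz_le /n; lia.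
Qed.


Variable mu : {measure set (Fmeas absv q) -> \bar R}.
Hypothesis Hmu : haar_normalized mu.
Local Notation T := (Fmeas absv q).
Local Notation DT b n := (Dk b n : set T).

Lemma meas_disk a k : measurable (disk absv q a k : set T).
Proof. by apply: sub_sigma_algebra; exists a, k. Qed.

Lemma mu_union (s : seq F) (A : F -> set T) : uniq s ->
  (forall c, c \in s -> measurable (A c)) ->
  (forall c c', c \in s -> c' \in s -> c != c' -> A c `&` A c' = set0) ->
  measurable (\big[setU/set0]_(c <- s) A c) /\
  mu (\big[setU/set0]_(c <- s) A c) = (\sum_(c <- s) mu (A c))%E.
Proof.
elim: s => [|c s IH] /=; first by rewrite !big_nil measure0.
move=> /andP [cs us] hm hd.
have [m1 e1] : measurable (\big[setU/set0]_(c <- s) A c) /\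
  mu (\big[setU/set0]_(c <- s) A c) = (\sum_(c <- s) mu (A c))%E.
  apply: IH => //; first by move=> c' h; apply: hm; rewrite inE h orbT.
  by move=> c1 c2 h1 h2; apply: hd; rewrite inE ?h1 ?h2 orbT.
have mc : measurable (A c) by apply: hm; rewrite inE eqxx.
rewrite !big_cons; split; first exact: measurableU.
rewrite measureU //; first by congr (_ + _)%E; exact: e1.
rewrite -bigcup_seq -subset0 => x [Acx [c' /= c's Ac'x]].
have ne : c != c' by apply: contraNneq cs => ->.
have := hd c c'; rewrite inE eqxx inE c's orbT => /(_ isT isT ne).
by rewrite -subset0 => /(_ x); apply.
Qed.

Lemma big_setIl (s : seq F) (A : F -> set T) (S : set T) :
  (\big[setU/set0]_(c <- s) A c) `&` S = \big[setU/set0]_(c <- s) (A c `&` S).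
Proof.
elim: s => [|c s IH]; first by rewrite !big_nil set0I.
by rewrite !big_cons setIUl IH.
Qed.

Lemma Dk_part b (n : nat) : Dk b n = \big[setU/set0]_(c <- C) Dk (b + c * pi ^ (n:int)) n.+1.
Proof.
apply/seteqP; split => x.
  rewrite DkE => hx.
  pose u := (x - b) * pi ^ (- (n:int)).
  have hu : absv u <= 1.
    rewrite /u absM abspiz opprK.
    apply: le_trans (_ : Q ^ (- (n:int)) * Q ^ (n:int) <= _).
      by apply: ler_wpM2r; [exact: Qz_ge0 | exact: hx].
    by rewrite QzM addNr Qz0.
  have [cC hc] := digP hu.
  rewrite -bigcup_seq; exists (dig u) => //.
  rewrite DkE.
  have -> : x - (b + dig u * pi ^ (n : int)) = (u - dig u) * pi ^ (n:int).
    by rewrite mulrBl /u -mulrA pizM addNr expr0z mulr1 opprD addrA.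
  rewrite absM abspiz; apply: le_trans (_ : Q ^ (-1) * Q ^ (- (n:int)) <= _).
    by apply: ler_wpM2r; [exact: Qz_ge0 | exact: abs_disc1].
  by rewrite QzM Qz_le; lia.
rewrite -bigcup_seq => -[c /= cC]; rewrite !DkE => hx.
have -> : x - b = (x - (b + c * pi ^ (n:int))) + c * pi ^ (n:int) by ring.
apply: abs_le_add; last exact: abs_cpi.
by apply: le_trans hx _; rewrite Qz_le; lia.
Qed.

Lemma Dk_disj b (n : nat) c c' : c \in C -> c' \in C -> c != c' ->
  Dk (b + c * pi ^ (n:int)) n.+1 `&` Dk (b + c' * pi ^ (n:int)) n.+1 = set0.
Proof.
move=> cC c'C ne; rewrite -subset0 => x []; rewrite !DkE => h1 h2.
have : absv ((x - (b + c' * pi ^ (n:int))) - (x - (b + c * pi ^ (n:int)))) <= Q ^ (- (n.+1 : int)).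
  exact: abs_le_sub.
have -> : (x - (b + c' * pi ^ (n:int))) - (x - (b + c * pi ^ (n:int))) =
  c * pi ^ (n:int) - c' * pi ^ (n:int) by ring.
by rewrite abs_cpi_diff // Qz_le; lia.
Qed.

Lemma part_sum b (n : nat) (S : set T) :
  (forall c, c \in C -> measurable (DT (b + c * pi ^ (n:int)) n.+1 `&` S)) ->
  measurable (DT b n `&` S) /\
  mu (DT b n `&` S) = (\sum_(c <- C) mu (DT (b + c * pi ^ (n:int)) n.+1 `&` S))%E.
Proof.
move=> hm; rewrite (Dk_part b n) big_setIl; apply: mu_union => //.
  exact: Cuniq.
move=> c c' cC c'C ne; rewrite -subset0 => x [[h1 _] [h2 _]].
by rewrite -(Dk_disj b n cC c'C ne); split.
Qed.

Lemma Dk_trans b (n : nat) : (fun x => b + x) @` (Dk 0 n) = Dk b n.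
Proof.
apply/seteqP; split => x.
  move=> [y hy <-]; rewrite DkE; have -> : b + y - b = y - 0 by ring.
  exact: hy.
move=> hx; exists (x - b); first by rewrite DkE subr0.
by rewrite addrC subrK.
Qed.

Lemma mu_Dk_trans b (n : nat) : mu (DT b n) = mu (DT 0 n).
Proof. by rewrite -Dk_trans (proj2 Hmu) //; exact: meas_disk. Qed.

Lemma Dk00 : Dk 0 0 = ring_O absv.
Proof. by apply/seteqP; split => x; rewrite DkE subr0 oppr0 Qz0. Qed.

Lemma esum_const (s : seq F) (x : \bar R) : (\sum_(c <- s) x)%E = (x *+ size s)%E.
Proof. by elim: s => [|c s IH]; rewrite ?big_nil // big_cons IH; exact: (esym (muleS x (size s))). Qed.

Lemma mu_Dk0 (n : nat) : mu (DT 0 n) = (Q ^ (- (n:int)))%:E.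
Proof.
elim: n => [|n IH]; first by rewrite Dk00 (proj1 Hmu) oppr0 Qz0.
have [_ e] := @part_sum 0 n setT (fun c _ => ltac:(rewrite setIT; exact: meas_disk)).
move: e; rewrite setIT.
have -> : (\sum_(c <- C) mu (DT (0 + c * pi ^ (n:int)) n.+1 `&` setT))%E =
          (\sum_(c <- C) mu (DT 0 n.+1))%E.
  by apply: eq_bigr => c _; rewrite setIT mu_Dk_trans.
rewrite esum_const Csize IH.
have m0 := measure_ge0 mu (DT 0 n.+1).
move: (mu (DT 0 n.+1)) m0 => [r| |] m1 //.
  move=> e0; have e : Q ^ (- (n:int)) = r *+ q by apply: EFin_inj; rewrite EFin_natmul.
  congr (_%:E); apply: (mulIf Q_neq0); rewrite mulr_natr -e -[X in _ = _ * X]expr1z QzM.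
  by congr (_ ^ _); lia.
  by rewrite -(prednK (ltnW q_gt1)) enatmul_pinfty.
by rewrite -(prednK (ltnW q_gt1)) enatmul_ninfty.
Qed.

Lemma mu_Dk b (n : nat) : mu (DT b n) = (Q ^ (- (n:int)))%:E.
Proof. by rewrite mu_Dk_trans mu_Dk0. Qed.

Definition good (j : nat) (G S : set T) (al : R) :=
  forall b, absv b <= 1 -> [/\ measurable (DT b j `&` S), measurable (DT b j `&` G) &
     mu (DT b j `&` S) = (al%:E * mu (DT b j `&` G))%E].

Lemma gen (k : nat) (G S : set T) (al : R) : 0 <= al -> good k G S al ->
  forall j, (j <= k)%N -> good j G S al.
Proof.
move=> al0 Hk j hj.
have [d hd] : exists d, (j + d = k)%N by exists (k - j)%N; rewrite subnKC.
elim: d j hj hd => [|d IH] j hj hd; first by move: hd; rewrite addn0 => ->.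
have IH1 := IH j.+1 (ltac:(lia)) (ltac:(lia)).
move=> b hb.
have hsub c : c \in C -> absv (b + c * pi ^ (j:int)) <= 1.
  move=> cC; apply: abs_le_add => //; apply: le_trans (abs_cpi _ cC) _.
  by rewrite -Qz0 Qz_le; lia.
have [mS eS] := @part_sum b j S (fun c cC => let: And3 h _ _ := IH1 _ (hsub c cC) in h).
have [mG eG] := @part_sum b j G (fun c cC => let: And3 _ h _ := IH1 _ (hsub c cC) in h).
split => //; rewrite eS eG ge0_sume_distrr; last by move=> *; exact: measure_ge0.
rewrite big_seq [in RHS]big_seq; apply: eq_bigr => c cC.
by have [_ _ ->] := IH1 _ (hsub c cC).
Qed.

Lemma useU (h : F -> F) (L : nat) (Hh : scaling absv q h L) (a : F) (Ha : absv a <= 1) (GM : nat) :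
  good L setT ((fun x => bracket absv pi C (h x)) @^-1` disk absv q a (- (GM:int)))
    (Q ^ (- (GM:int))).
Proof.
move=> b hb; set s := h b - bracket absv pi C (h b).
have E : DT b L `&` ((fun x => bracket absv pi C (h x)) @^-1` disk absv q a (- (GM:int)))
       = Dk b L `&` h @^-1` Dk (a + s) GM.
  apply/seteqP; split => z [hz hD]; split => //;
  (have hd : absv (h z - h b) <= 1 by
    rewrite Hh ?(Dk_O hb hz) //; apply: le_trans (_ : Q ^ (L:int) * Q ^ (- (L:int)) <= _);
     [apply: ler_wpM2l; [exact: Qz_ge0 | exact: hz] | rewrite QzM subrr Qz0]);
  have bd := brk_diff hd;
  (have eqz : bracket absv pi C (h z) - a = h z - (a + s) by
      rewrite -[bracket _ _ _ (h z)](subrK (bracket absv pi C (h b))) bd /s; ring).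
    change (absv (h z - (a + s)) <= Q ^ (- (GM:int))); rewrite -eqz; exact: hD.
  change (absv (bracket absv pi C (h z) - a) <= Q ^ (- (GM:int))); rewrite eqz; exact: hD.
have he : absv (a + s - h b) <= 1.
  have -> : a + s - h b = a - bracket absv pi C (h b) by rewrite /s; ring.
  by apply: abs_le_sub => //; exact: bracket_O.
have [x ex] := preimP Hh hb GM he.
rewrite setIT E ex; split; [exact: meas_disk | exact: meas_disk |].
by rewrite !mu_Dk -EFinM QzM; congr (_ ^ _)%:E; lia.
Qed.

Lemma locc (g : F -> F) (LG GM : nat) (Hg : scaling absv q g LG) a b : absv b <= 1 ->
  let G := (fun x => bracket absv pi C (g x)) @^-1` disk absv q a (- (GM:int)) in
  (G b -> Dk b (GM + LG)%N `<=` G) /\ (~ G b -> Dk b (GM + LG)%N `&` G = set0).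
Proof.
move=> hb G.
have key z : Dk b (GM + LG)%N z ->
   bracket absv pi C (g z) - bracket absv pi C (g b) = g z - g b /\
   absv (g z - g b) <= Q ^ (- (GM:int)).
  move=> hz.
  have hd : absv (g z - g b) <= Q ^ (- (GM:int)).
    rewrite Hg ?(Dk_O hb hz) //; apply: le_trans (_ : Q ^ (LG:int) * Q ^ (- ((GM + LG)%N:int)) <= _).
      by apply: ler_wpM2l; [exact: Qz_ge0 | exact: hz].
    by rewrite QzM Qz_le; lia.
  split => //; apply: brk_diff; apply: le_trans hd _; rewrite -Qz0 Qz_le; lia.
split.
  move=> Gb z hz; have [bd hd] := key z hz.
  change (absv (bracket absv pi C (g z) - a) <= Q ^ (- (GM:int))).
  have -> : bracket absv pi C (g z) - a =
     (bracket absv pi C (g z) - bracket absv pi C (g b)) + (bracket absv pi C (g b) - a) by ring.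
  by rewrite bd; apply: abs_le_add.
move=> nGb; rewrite -subset0 => z [hz Gz]; apply: nGb.
have [bd hd] := key z hz.
change (absv (bracket absv pi C (g b) - a) <= Q ^ (- (GM:int))).
have -> : bracket absv pi C (g b) - a =
     (bracket absv pi C (g z) - a) - (bracket absv pi C (g z) - bracket absv pi C (g b)) by ring.
by rewrite bd; apply: abs_le_sub.
Qed.

Lemma main_sec (f g : F -> F) (LF LG GM : nat) (Hf : scaling absv q f LF)
  (Hg : scaling absv q g LG) (hle : (GM + LG <= LF)%N) (a : F) (Ha : absv a <= 1) :
  let tf := fun x => bracket absv pi C (f x) in
  let tg := fun x => bracket absv pi C (g x) in
  let D := disk absv q a (- (GM:int)) in
  mu (ring_O absv `&` (tf @^-1` D `&` tg @^-1` D)) =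
    (\int[mu]_(x in ring_O absv) ((\1_D (tf x) : R) * \1_D (tg x))%:E)%E /\
  (\int[mu]_(x in ring_O absv) ((\1_D (tf x) : R) * \1_D (tg x))%:E)%E =
    (mu D ^+ 2)%E.
Proof.
move=> tf tg D.
set al := Q ^ (- (GM:int)).
have al0 : 0 <= al by exact: Qz_ge0.
set G : set T := tg @^-1` D.
set Tf : set T := tf @^-1` D.
have F1 := gen al0 (useU Hg Ha GM) (leq0n LG).
have F2 := gen al0 (useU Hf Ha GM) hle.
have F3 : good (GM + LG) G (Tf `&` G) al.
  move=> b hb; have [h1 h2] := locc GM Hg a hb.
  have [_ _ e2] := F2 b hb; have [m2 _ _] := F2 b hb.
  have [Gb|nGb] := pselect (G b).
    have e : DT b (GM + LG) `&` G = DT b (GM + LG) by apply: setIidl; exact: h1.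
    have e' : DT b (GM + LG) `&` (Tf `&` G) = DT b (GM + LG) `&` Tf.
      by rewrite setIA (setIC _ Tf) -setIA e setIC.
    rewrite e e'; split => //; first exact: meas_disk.
    by rewrite e2 setIT.
  have e := h2 nGb.
  have e' : DT b (GM + LG) `&` (Tf `&` G) = set0.
    by rewrite setIA (setIC _ Tf) -setIA e setI0.
  by rewrite e e' measure0 mule0; split.
have F4 := gen al0 F3 (leq0n _).
have [mO _ eO] := F4 0 (ltac:(by rewrite abs0 ler01)).
have [_ _ eG] := F1 0 (ltac:(by rewrite abs0 ler01)).
rewrite -Dk00.
have lhs : mu (DT 0 0 `&` (Tf `&` G)) = (al%:E * al%:E)%E.
  by rewrite eO eG setIT mu_Dk oppr0 Qz0 mule1.
have integ : (\int[mu]_(x in DT 0 0) ((\1_D (tf x) : R) * \1_D (tg x))%:E)%E =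
     mu (DT 0 0 `&` (Tf `&` G)).
  rewrite (eq_integral (fun x => (\1_(DT 0 0 `&` (Tf `&` G)) x)%:E)); last first.
    move=> x; rewrite inE => hx.
    rewrite indicI /= [X in (_ = (X * _)%:E)]indicE mem_set // mul1r indicI.
    by [].
  rewrite integral_indic //; last exact: meas_disk.
  congr (mu _); apply/seteqP; split => x; first by move=> [[h1 h2] _]; split.
  by move=> [h1 h2]; split.

split; first by rewrite integ.
by rewrite integ lhs expe2 mu_Dk.
Qed.

End LF.

Unset Implicit Arguments.

Theorem lemma3p2 (R : realType) (F : fieldType) (absv : F -> R) (q : nat)
  (pi : F) (C : seq F) (HF : nonarch_local_field absv q pi C)
  (mu : {measure set (Fmeas absv q) -> \bar R}) (Hmu : haar_normalized mu)
  (f g : F -> F) (lf lg : int)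
  (Hf : scaling absv q f lf) (Hg : scaling absv q g lg)
  (Hlfg : lg < lf) (Hlg : 0 <= lg)
  (a : F) (Ha : absv a <= 1) (gam : int) (Hgam0 : 0 <= gam) (Hgam1 : gam <= lf - lg) :
  let tf := fun x => bracket absv pi C (f x) in
  let tg := fun x => bracket absv pi C (g x) in
  let D := disk absv q a (- gam) in
  mu (ring_O absv `&` (tf @^-1` D `&` tg @^-1` D)) =
    (\int[mu]_(x in ring_O absv) ((\1_D (tf x) : R) * \1_D (tg x))%:E)%E /\
  (\int[mu]_(x in ring_O absv) ((\1_D (tf x) : R) * \1_D (tg x))%:E)%E =
    (mu D ^+ 2)%E.
Proof.
case: lg Hg Hlfg Hgam1 Hlg => [LG|n] Hg Hlfg Hgam1 Hlg; last by [].
case: gam Hgam0 Hgam1 => [GM|n] Hgam0 Hgam1; last by [].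
case: lf Hf Hlfg Hgam1 => [LF|n] Hf Hlfg Hgam1; last by [].
apply: (main_sec HF Hmu Hf Hg _ Ha).
lia.
Qed.
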